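(* Let $(\mathcal{X},d)$ be a finite metric space with at least two points, let $\mu,\nu\in\mathcal{M}_+(\mathcal{X})$, $p\ge 1$ and $C>0$. Fix a resolution $q>1$ and a depth $L\in\mathbb{N}$, and let $Q_0,\dots,Q_{L+1}$, the tree $\mathcal{T}$, the descendant sets $\mathcal{C}(\cdot)$ and the height function $h_{q,L}(k)=\frac{q^{1-k}-q^{-L}}{q-1}\mathrm{diam}(\mathcal{X})$ be as in the context. For $l\in\{1,\dots,L+1\}$ set $$B_{q,p,L,\mathcal{X}}(l)=2^{p-1}\sum_{j=l}^{L+1}\sum_{x\in Q_j}\big(h_{q,L}(j-1)^p-h_{q,L}(j)^p\big)\,\big|\mu^L(\mathcal{C}(x,j))-\nu^L(\mathcal{C}(x,j))\big|.$$ Then: (i) if $C\ge 2h_{q,L}(0)$, then $\mathrm{KR}^p_{p,C}(\mu,\nu)\le \big(\tfrac{C^p}{2}-2^{p-1}h_{q,L}(0)^p\big)|\mathbb{M}(\mu)-\mathbb{M}(\nu)|+B_{q,p,L,\mathcal{X}}(1)$; (ii) if $2h_{q,L}(l)\le C<2h_{q,L}(l-1)$ for some $l\in\{1,\dots,L\}$, then $\mathrm{KR}^p_{p,C}(\mu,\nu)\le B_{q,p,L,\mathcal{X}}(l)$; (iii) if $C\le \max\{2h_{q,L}(L),\ \min_{x\neq x'}d(x,x')\}$, then $\mathrm{KR}^p_{p,C}(\mu,\nu)\le \frac{C^p}{2}\mathrm{TV}(\mu,\nu)$, where $\mathrm{TV}(\mu,\nu)=\sum_{x\in\mathcal{X}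}|\mu(x)-\nu(x)|$.
   Context: $\mathcal{M}_+(\mathcal{X})$ is the set of non-negative measures on the finite set $\mathcal{X}$ (identified with vectors $(\mu(x))_{x\in\mathcal{X}}$), $\mathbb{M}(\mu)=\sum_x\mu(x)$ its total mass. For $\pi\in\mathcal{M}_+(\mathcal{X}\times\mathcal{X})$, marginals are $\pi(x,\mathcal{X})=\sum_{x'}\pi(x,x')$, $\pi(\mathcal{X},x')=\sum_x\pi(x,x')$. The set of sub-couplings is $\Pi_{\le}(\mu,\nu)=\{\pi\in\mathcal{M}_+(\mathcal{X}\times\mathcal{X}):\pi(x,\mathcal{X})\le\mu(x),\ \pi(\mathcal{X},x')\le\nu(x')\ \forall x,x'\}$. For $p\ge1$, $C>0$ the $(p,C)$-Kantorovich–Rubinstein distance is $$\mathrm{KR}_{p,C}(\mu,\nu)=\Big(\min_{\pi\in\Pi_\le(\mu,\nu)}\sum_{x,x'}d^p(x,x')\pi(x,x')+C^p\Big(\tfrac{\mathbb{M}(\mu)+\mathbb{M}(\nu)}{2}-\mathbb{M}(\pi)\Big)\Big)^{1/p}.$$ Tree construction: for $\epsilon>0$, an $\epsilon$-cover of $\mathcal{X}$ is a subset $S\subset\mathcal{X}$ such that every $x\in\mathcal{X}$ has $d(x,y)\le\epsilon$ for some $y\in S$. For $j=0,\dots,L$ let $Q_j\subset\mathcal{X}$ be a $q^{-j}\mathrm{diam}(\mathcal{X})$-cover of minimal cardinality (so $|Q_0|=1$), and $Q_{L+1}=\mathcal{X}$. The nodes of $\mathcal{T}$ are the pairs $(x,j)$,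 $x\in Q_j$, $j=0,\dots,L+1$; the root is the unique node of level $0$. Each node $(x',j+1)$ is joined by an edge to exactly one node $(x,j)$ with $d(x,x')\le q^{-j}\mathrm{diam}(\mathcal{X})$ (its parent; ties broken arbitrarily). A node at level $k$ has height $h_{q,L}(k)$, so leaves (level $L+1$, identified with the points of $\mathcal{X}$) have height $0$. For a node $v$, $\mathcal{C}(v)$ denotes the set of nodes whose path to the root passes through $v$ (including $v$). The measure $\mu^L$ is $\mu$ viewed as a measure on the leaves, so $\mu^L(\mathcal{C}(v))$ is the total $\mu$-mass of the points $x\in\mathcal{X}$ whose leaf $(x,L+1)$ descends from $v$; similarly $\nu^L$. *)

(* Defs.v *)
From HB Require Import structures.
From mathcomp Require Import all_boot all_order all_algebra.
From mathcomp Require Import all_classical all_reals all_analysis.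
Set Implicit Arguments. Unset Strict Implicit. Unset Printing Implicit Defensive.
Import Order.TTheory GRing.Theory Num.Theory.
Local Open Scope ring_scope.
Local Open Scope classical_set_scope.

Definition setTfin (X : finType) : {set X} := finset.setTfor X.

Section KRDefs.
Variables (R : realType) (X : finType).

Definition is_metric (d : X -> X -> R) : Prop :=
  [/\ forall x y, 0 <= d x y,
      forall x y, d x y = 0 <-> x = y,
      forall x y, d x y = d y x &
      forall x y z, d x z <= d x y + d y z].

Definition diam (d : X -> X -> R) : R :=
  \big[Num.max/0]_(x : X) \big[Num.max/0]_(y : X) d x y.

(* min_{x <> x'} d(x,x'); the neutral element diam X is >= every distance,
   so this is the true minimum as soon as X has two points. *)
Definition min_dist (d : X -> X -> R) : R :=
  \big[Num.min/diam d]_(x : X) \big[Num.min/diam d]_(y : X | y != x) d x y.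

Definition is_measure (mu : X -> R) : Prop := forall x, 0 <= mu x.

Definition mass (mu : X -> R) : R := \sum_(x : X) mu x.

Definition TV (mu nu : X -> R) : R := \sum_(x : X) `|mu x - nu x|.

Definition subcoupling (mu nu : X -> R) (pi : X -> X -> R) : Prop :=
  [/\ forall x x', 0 <= pi x x',
      forall x, \sum_(x' : X) pi x x' <= mu x &
      forall x', \sum_(x : X) pi x x' <= nu x'].

Definition KR_cost (d : X -> X -> R) (p C : R) (mu nu : X -> R)
    (pi : X -> X -> R) : R :=
  \sum_(x : X) \sum_(x' : X) (d x x' `^ p) * pi x x'
  + (C `^ p) * ((mass mu + mass nu) / 2 - \sum_(x : X) \sum_(x' : X) pi x x').

(* KR_{p,C}(mu,nu) = (min over sub-couplings of the cost)^(1/p);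
   the min is written as an infimum (it is attained). *)
Definition KR (d : X -> X -> R) (p C : R) (mu nu : X -> R) : R :=
  (inf [set KR_cost d p C mu nu pi | pi in subcoupling mu nu]) `^ (p^-1).

Definition is_cover (d : X -> X -> R) (eps : R) (S : {set X}) : Prop :=
  forall x : X, exists2 y, y \in S & d x y <= eps.

Definition min_cover (d : X -> X -> R) (eps : R) (S : {set X}) : Prop :=
  is_cover d eps S /\ forall S' : {set X}, is_cover d eps S' -> (#|S| <= #|S'|)%N.

(* Tree data: Q j (j = 0..L+1) the node sets of level j, par j x' the
   (point of the) parent at level j of the node (x', j+1). *)
Definition tree_data (d : X -> X -> R) (q : R) (L : nat)
    (Q : nat -> {set X}) (par : nat -> X -> X) : Prop :=
  [/\ forall j, (j <= L)%N -> min_cover d (q `^ (- j%:R) * diam d) (Q j),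
      Q L.+1 = setTfin X &
      forall j x', (j <= L)%N -> x' \in Q j.+1 ->
        par j x' \in Q j /\ d (par j x') x' <= q `^ (- j%:R) * diam d].

(* ancestor at level L+1-m of the leaf (y, L+1) *)
Fixpoint anc_steps (L : nat) (par : nat -> X -> X) (m : nat) (y : X) : X :=
  match m with
  | 0 => y
  | m'.+1 => par (L - m')%N (anc_steps L par m' y)
  end.

Definition anc (L : nat) (par : nat -> X -> X) (j : nat) (y : X) : X :=
  anc_steps L par (L.+1 - j) y.

Definition mass_desc (L : nat) (par : nat -> X -> X) (mu : X -> R)
    (x : X) (j : nat) : R :=
  \sum_(y : X | anc L par j y == x) mu y.

Definition height (d : X -> X -> R) (q : R) (L k : nat) : R :=
  (q `^ (1 - k%:R) - q `^ (- L%:R)) / (q - 1) * diam d.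

Definition Bq (d : X -> X -> R) (q p : R) (L : nat) (Q : nat -> {set X})
    (par : nat -> X -> X) (mu nu : X -> R) (l : nat) : R :=
  2 `^ (p - 1) *
  \sum_(l <= j < L.+2) \sum_(x in Q j)
     ((height d q L j.-1 `^ p - height d q L j `^ p)
      * `|mass_desc L par mu x j - mass_desc L par nu x j|).

End KRDefs.

(* Main.v *)
Require Import Defs.
From HB Require Import structures.
From mathcomp Require Import all_boot all_order all_algebra.
From mathcomp Require Import all_classical all_reals all_analysis.
From mathcomp Require Import zify ring lra.
Import Order.TTheory GRing.Theory Num.Theory.
Local Open Scope ring_scope.

Lemma absdiff (R : realType) (A B : R) : 0 <= A -> 0 <= B ->
  A * (1 - B / Num.max A B) + B * (1 - A / Num.max A B) = `|A - B|.
Proof.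
move=> A0 B0.

have [AB|BA] := leP A B.
  rewrite distrC ger0_norm ?subr_ge0 //.
  have [B0e|B0'] := eqVneq B 0.
    have -> : A = 0 by apply/le_anti; rewrite A0 andbT -B0e AB.
    rewrite B0e.
    by rewrite !mul0r subrr addr0.
  by field.
rewrite ger0_norm ?subr_ge0 ?(ltW BA) //.
have A0' : A != 0 by rewrite gt_eqF // (le_lt_trans B0 BA).
by field.
Qed.

Section Step.
Variables (R : realType) (X : finType) (g : X -> X).
Implicit Types (a b : X -> R).

Definition cls a y := \sum_(z | g z == g y) a z.
Definition Mx a b y := Num.max (cls a y) (cls b y).
Definition rho a b y y' := if g y == g y' then a y * b y' / Mx a b y else 0.
Definition nxa a b y := a y - \sum_y' rho a b y y'.
Definition nxb a b y' := b y' - \sum_y rho a b y y'.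

Lemma cls_ge0 a y : (forall z, 0 <= a z) -> 0 <= cls a y.
Proof. by move=> a0; apply: sumr_ge0. Qed.

Lemma cls_eq a y y' : g y = g y' -> cls a y = cls a y'.
Proof. by rewrite /cls => ->. Qed.

Lemma Mx_eq a b y y' : g y = g y' -> Mx a b y = Mx a b y'.
Proof. by move=> e; rewrite /Mx (cls_eq a _ _ e) (cls_eq b _ _ e). Qed.

Lemma rho_ge0 a b y y' : (forall z, 0 <= a z) -> (forall z, 0 <= b z) ->
  0 <= rho a b y y'.
Proof.
move=> a0 b0; rewrite /rho; case: ifP => // _.
apply: divr_ge0; first exact: mulr_ge0.
by rewrite /Mx le_max cls_ge0.
Qed.

Lemma rowsum a b y : \sum_y' rho a b y y' = a y * cls b y / Mx a b y.
Proof.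
rewrite /rho.
under eq_bigr => y' _ do rewrite (eq_sym (g y)).
rewrite -big_mkcond /= /cls mulr_sumr mulr_suml.
by apply: eq_bigr.
Qed.

Lemma colsum a b y' : \sum_y rho a b y y' = b y' * cls a y' / Mx a b y'.
Proof.
rewrite /rho.
have -> : \sum_y (if g y == g y' then a y * b y' / Mx a b y else 0)
        = \sum_y (if g y == g y' then a y * b y' / Mx a b y' else 0).
  by apply: eq_bigr => y _; case: ifP => // /eqP e; rewrite (Mx_eq a b _ _ e).
rewrite -big_mkcond /= /cls mulr_sumr mulr_suml.
by apply: eq_bigr => y _; rewrite (mulrC (a y)).
Qed.

Lemma frac_le a b y (c : R) : 0 <= c -> c <= Mx a b y -> 0 <= a y ->
  a y * c / Mx a b y <= a y.
Proof.
move=> c0 cM ay0.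
have [->|M0] := eqVneq (Mx a b y) 0; first by rewrite invr0 mulr0.
have Mp : 0 < Mx a b y by rewrite lt_def M0 (le_trans c0 cM).
by rewrite ler_pdivrMr // ler_wpM2l.
Qed.

Lemma nxa_ge0 a b y : (forall z, 0 <= a z) -> (forall z, 0 <= b z) -> 0 <= nxa a b y.
Proof.
move=> a0 b0; rewrite /nxa rowsum subr_ge0.
by apply: frac_le => //; [exact: cls_ge0 | rewrite /Mx le_max lexx orbT].
Qed.

Lemma nxb_ge0 a b y : (forall z, 0 <= a z) -> (forall z, 0 <= b z) -> 0 <= nxb a b y.
Proof.
move=> a0 b0; rewrite /nxb colsum subr_ge0.
have -> : Mx a b y = Mx b a y by rewrite /Mx maxC.
by apply: frac_le => //; [exact: cls_ge0 | rewrite /Mx le_max lexx orbT].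
Qed.

Lemma mass_nxa a b : \sum_y nxa a b y = \sum_y a y - \sum_y \sum_y' rho a b y y'.
Proof. by rewrite /nxa sumrB. Qed.

Lemma mass_nxb a b : \sum_y nxb a b y = \sum_y b y - \sum_y \sum_y' rho a b y y'.
Proof. by rewrite /nxb sumrB exchange_big. Qed.

Lemma diff_inv (h : X -> X) a b x :
  (forall y y', g y = g y' -> h y = h y') ->
  \sum_(y | h y == x) (nxa a b y - nxb a b y) = \sum_(y | h y == x) (a y - b y).
Proof.
move=> hg.
have E1 : forall y, h y == x -> \sum_y' rho a b y y' = \sum_(y' | h y' == x) rho a b y y'.
  move=> y hy; rewrite [RHS]big_mkcond; apply: eq_bigr => y' _.
  case: ifP => // hy'; rewrite /rho; case: ifP => // /eqP gy.
  by move: hy'; rewrite -(hg _ _ gy) hy.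
have E2 : forall y', h y' == x -> \sum_y rho a b y y' = \sum_(y | h y == x) rho a b y y'.
  move=> y' hy; rewrite [RHS]big_mkcond; apply: eq_bigr => y _.
  case: ifP => // hy'; rewrite /rho; case: ifP => // /eqP gy.
  by move: hy'; rewrite (hg _ _ gy) hy.
have Eq : \sum_(y | h y == x) \sum_y' rho a b y y'
        = \sum_(y' | h y' == x) \sum_y rho a b y y'.
  rewrite (eq_bigr _ E1) [RHS](eq_bigr _ E2).
  exact: exchange_big.
have E : \sum_(y | h y == x) (\sum_y' rho a b y y' - \sum_y'' rho a b y'' y) = 0.
  by rewrite sumrB Eq subrr.
transitivity (\sum_(y | h y == x) ((a y - b y) -
     (\sum_y' rho a b y y' - \sum_y'' rho a b y'' y))).
  by apply: eq_bigr => y _; rewrite /nxa /nxb; ring.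
by rewrite sumrB E subr0.
Qed.

Lemma rho_cost (dd : X -> X -> R) (c : R) a b :
  (forall z, 0 <= a z) -> (forall z, 0 <= b z) ->
  (forall y y', g y = g y' -> dd y y' <= c) ->
  \sum_y \sum_y' dd y y' * rho a b y y' <= c * \sum_y \sum_y' rho a b y y'.
Proof.
move=> a0 b0 hd; rewrite mulr_sumr; apply: ler_sum => y _.
rewrite mulr_sumr; apply: ler_sum => y' _.
have := @rho_ge0 a b y y' a0 b0.
rewrite /rho; case: ifP => [/eqP e|_] r0; last by rewrite !mulr0.
by apply: ler_wpM2r => //; apply: hd.
Qed.

Lemma resid (S : {set X}) a b : (forall y, g y \in S) ->
  (forall z, 0 <= a z) -> (forall z, 0 <= b z) ->
  \sum_y nxa a b y + \sum_y nxb a b y =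
  \sum_(x in S) `|\sum_(y | g y == x) a y - \sum_(y | g y == x) b y|.
Proof.
move=> gS a0 b0.
rewrite -big_split /=.
rewrite (partition_big g (fun x => x \in S)) //=.
apply: eq_bigr => x xS.
set A := \sum_(y | g y == x) a y; set B := \sum_(y | g y == x) b y.
have A0 : 0 <= A by apply: sumr_ge0.
have B0 : 0 <= B by apply: sumr_ge0.
rewrite -(@absdiff _ A B A0 B0).
transitivity (\sum_(y | g y == x) (a y * (1 - B / Num.max A B) + b y * (1 - A / Num.max A B))).
  apply: eq_bigr => y /eqP gy.
  rewrite /nxa /nxb rowsum colsum /Mx.
  have ca : cls a y = A by rewrite /cls gy.
  have cb : cls b y = B by rewrite /cls gy.
  rewrite ca cb; ring.
by rewrite big_split /= -!mulr_suml.
Qed.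

End Step.
Arguments cls {R X}. Arguments Mx {R X}. Arguments rho {R X}.
Arguments nxa {R X}. Arguments nxb {R X}.

Section Main.
Variables (R : realType) (X : finType) (d : X -> X -> R) (q : R) (L : nat)
  (Q : nat -> {set X}) (par : nat -> X -> X) (mu nu : X -> R) (p C : R).
Hypothesis (dm : is_metric d) (q1 : 1 < q) (td : tree_data d q L Q par).
Hypothesis (mu0 : is_measure mu) (nu0 : is_measure nu) (p1 : 1 <= p) (C0 : 0 < C).

Lemma ancS j y : (j <= L)%N -> anc L par j y = par j (anc L par j.+1 y).
Proof.
move=> jL; rewrite /anc subSS.
have -> : (L.+1 - j = (L - j).+1)%N by lia.
by rewrite /= subKn.
Qed.

Lemma anc_top y : anc L par L.+1 y = y.
Proof. by rewrite /anc subnn. Qed.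

Lemma anc_refine j0 y y' : (j0 <= L.+1)%N -> anc L par j0 y = anc L par j0 y' ->
  forall j, (j <= j0)%N -> anc L par j y = anc L par j y'.
Proof.
move=> j0L e.
suff H : forall n, anc L par (j0 - n) y = anc L par (j0 - n) y'.
  by move=> j jj0; have := H (j0 - j)%N; rewrite subKn.
elim=> [|n IH]; first by rewrite subn0.
case: (ltnP n j0) => h.
  have e1 : (j0 - n = (j0 - n.+1).+1)%N by lia.
  rewrite e1 in IH.
  have hl : (j0 - n.+1 <= L)%N by lia.
  by rewrite (ancS _ y hl) (ancS _ y' hl) IH.
have -> : (j0 - n.+1 = j0 - n)%N by lia.
exact: IH.
Qed.

Lemma anc_in j y : (j <= L.+1)%N -> anc L par j y \in Q j.
Proof.
case: td => _ QT hp.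
suff H : forall n, (n <= L.+1)%N -> anc L par (L.+1 - n) y \in Q (L.+1 - n).
  by move=> jL; have := H (L.+1 - j)%N; rewrite subKn //; apply; lia.
elim=> [|n IH] nL.
  by rewrite subn0 anc_top QT /setTfin finset.in_setT.
have e1 : (L.+1 - n = (L - n).+1)%N by lia.
have -> : (L.+1 - n.+1 = L - n)%N by lia.
rewrite ancS; last by lia.
rewrite e1 in IH.
by case: (hp (L - n)%N (anc L par (L - n).+1 y) (leq_subr _ _) (IH (ltnW nL))).
Qed.


Lemma diam_ge0 : 0 <= diam d.
Proof. rewrite /diam; by elim/big_rec: _ => // i x _ hx; rewrite le_max hx orbT. Qed.

Lemma hL : height d q L L.+1 = 0.
Proof.
rewrite /height -natr1.
have -> : 1 - (L%:R + 1) = - L%:R :> R by ring.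
by rewrite subrr !mul0r.
Qed.

Lemma hS k : height d q L k = q `^ (- k%:R) * diam d + height d q L k.+1.
Proof.
rewrite /height -natr1.
have -> : 1 - (k%:R + 1) = - k%:R :> R by ring.
have q0 : 0 < q by apply: lt_trans q1.
rewrite powRD; last by apply/implyP => _; rewrite gt_eqF.
rewrite powRr1; last exact: ltW.
have hq : q - 1 != 0 by rewrite subr_eq0 gt_eqF.
by field.
Qed.

Lemma h_ge0 k : (k <= L.+1)%N -> 0 <= height d q L k.
Proof.
suff H : forall n, (n <= L.+1)%N -> 0 <= height d q L (L.+1 - n).
  by move=> kL; have := H (L.+1 - k)%N; rewrite subKn //; apply; lia.
elim=> [|n IH] nL; first by rewrite subn0 hL.
have e1 : (L.+1 - n = (L - n).+1)%N by lia.
have -> : (L.+1 - n.+1 = L - n)%N by lia.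
rewrite hS -e1; apply: addr_ge0; last exact: IH (ltnW nL).
exact: mulr_ge0 (powR_ge0 _ _) diam_ge0.
Qed.

Lemma d_anc j y : (j <= L.+1)%N -> d y (anc L par j y) <= height d q L j.
Proof.
case: dm => _ d0 ds dt.
case: td => _ QT hp.
suff H : forall n, (n <= L.+1)%N -> d y (anc L par (L.+1 - n) y) <= height d q L (L.+1 - n).
  by move=> kL; have := H (L.+1 - j)%N; rewrite subKn //; apply; lia.
elim=> [|n IH] nL; first by rewrite subn0 hL anc_top (proj2 (d0 y y) erefl).
have e1 : (L.+1 - n = (L - n).+1)%N by lia.
have -> : (L.+1 - n.+1 = L - n)%N by lia.
rewrite e1 in IH.
have hl : (L - n <= L)%N by lia.
rewrite (ancS _ y hl) hS.
set z := anc L par (L - n).+1 y.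
have zin : z \in Q (L - n).+1 by rewrite /z -e1; apply: anc_in; lia.
case: (hp _ _ hl zin) => _ hz.
apply: le_trans (dt _ z _) _.
rewrite addrC; apply: lerD; last exact: IH (ltnW nL).
by rewrite ds.
Qed.

Lemma d_same j y y' : (j <= L.+1)%N -> anc L par j y = anc L par j y' ->
  d y y' <= 2 * height d q L j.
Proof.
case: dm => _ _ ds dt => jL e.
apply: le_trans (dt _ (anc L par j y) _) _.
rewrite mulr2n mulrDl mul1r; apply: lerD; first exact: d_anc.
by rewrite ds e; apply: d_anc.
Qed.


Definition Sta := ((X -> R) * (X -> R) * (X -> X -> R))%type.

Definition stp (j0 : nat) (s : Sta) : Sta :=
  (nxa (anc L par j0) s.1.1 s.1.2, nxb (anc L par j0) s.1.1 s.1.2,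
   fun y y' => s.2 y y' + rho (anc L par j0) s.1.1 s.1.2 y y').

Fixpoint st (k : nat) : Sta :=
  match k with 0 => (mu, nu, fun _ _ => 0) | k'.+1 => stp (L.+1 - k') (st k') end.

Definition Dlev (j : nat) : R :=
  if j == L.+2 then mass mu + mass nu
  else \sum_(x in Q j) `|mass_desc L par mu x j - mass_desc L par nu x j|.

Definition hp (j : nat) : R := height d q L j `^ p.

Definition Inv (k : nat) : Prop :=
  let l := (L.+2 - k)%N in
  (forall z, 0 <= (st k).1.1 z /\ 0 <= (st k).1.2 z) /\
  (forall y y', 0 <= (st k).2 y y') /\
  (forall y, (st k).1.1 y + \sum_y' (st k).2 y y' = mu y) /\
  (forall y', (st k).1.2 y' + \sum_y (st k).2 y y' = nu y') /\
  (\sum_y (st k).1.1 y + \sum_y (st k).1.2 y = Dlev l) /\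
  (forall j x, (j <= l)%N -> mass_desc L par (st k).1.1 x j - mass_desc L par (st k).1.2 x j
                     = mass_desc L par mu x j - mass_desc L par nu x j) /\
  (\sum_y \sum_y' d y y' `^ p * (st k).2 y y' <=
        2 `^ (p - 1) * \sum_(l <= j < L.+2) hp j * (Dlev j.+1 - Dlev j)).

Lemma two_pow : 2 `^ p = 2 * 2 `^ (p - 1).
Proof. by rewrite mulr_powRB1 //; apply: lt_le_trans ltr01 p1. Qed.

Lemma Inv0 : Inv 0.
Proof.
rewrite /Inv subn0 /=; split; [|split; [|split; [|split; [|split; [|split]]]]].
- by move=> z; split; [apply: mu0 | apply: nu0].
- by [].
- by move=> y; rewrite big1 ?addr0.
- by move=> y; rewrite big1 ?addr0.
- by rewrite /Dlev eqxx.
- by [].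
- rewrite big_geq // mulr0.
  by rewrite big1 // => y _; rewrite big1 // => y' _; rewrite mulr0.
Qed.

Lemma InvS k : (k < L.+2)%N -> Inv k -> Inv k.+1.
Proof.
move=> kL [I1 [I2 [I3 [I4 [I5 [I6 I7]]]]]].
set j0 := (L.+1 - k)%N.
have el : (L.+2 - k = j0.+1)%N by rewrite /j0; lia.
have el' : (L.+2 - k.+1 = j0)%N by rewrite /j0; lia.
rewrite el in I5 I6 I7.
rewrite /Inv el' /=.
rewrite -/j0.
set a := (st k).1.1; set b := (st k).1.2; set pi := (st k).2.
set g := anc L par j0.
have a0 : forall z, 0 <= a z by move=> z; case: (I1 z).
have b0 : forall z, 0 <= b z by move=> z; case: (I1 z).
have j0L : (j0 <= L.+1)%N by rewrite /j0; lia.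
have I5' : \sum_y nxa g a b y + \sum_y nxb g a b y = Dlev j0.
  rewrite (@resid _ _ g (Q j0)) //; last by move=> y; apply: anc_in.
  rewrite /Dlev ifF; last by apply/negbTE; rewrite neq_ltn; apply/orP; left; lia.
  apply: eq_bigr => x _.
  by have := I6 j0 x (leqnSn _); rewrite /mass_desc => ->.
split; [|split; [|split; [|split; [|split; [|split]]]]].
- by move=> z; split; [apply: nxa_ge0 | apply: nxb_ge0].
- by move=> y y'; apply: addr_ge0 => //; apply: rho_ge0.
- move=> y; rewrite /nxa big_split /= -(I3 y) -/a -/pi; ring.
- move=> y'; rewrite /nxb big_split /= -(I4 y') -/b -/pi; ring.
- exact: I5'.
- move=> j x jj0.
  rewrite /mass_desc -!sumrB (@diff_inv _ _ g (anc L par j)).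
    by have := I6 j x (leqW jj0); rewrite /mass_desc -!sumrB.
  by move=> y y' e; exact: (anc_refine _ _ _ j0L e _ jj0).
- have p0 : 0 <= p by apply: le_trans p1; exact: ler01.
  have Ed : \sum_y \sum_y' d y y' `^ p * (pi y y' + rho g a b y y')
      = \sum_y \sum_y' d y y' `^ p * pi y y' + \sum_y \sum_y' d y y' `^ p * rho g a b y y'.
    rewrite -big_split; apply: eq_bigr => y _; rewrite -big_split.
    by apply: eq_bigr => y' _; rewrite mulrDr.
  have Hr : \sum_y \sum_y' d y y' `^ p * rho g a b y y'
      <= (2 * height d q L j0) `^ p * \sum_y \sum_y' rho g a b y y'.
    apply: rho_cost => // y y' e.
    have [dd0 _ _ _] := dm.
    apply: ge0_ler_powR => //; rewrite ?nnegrE //.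
      by apply: mulr_ge0 => //; apply: h_ge0.
    exact: (d_same _ _ _ j0L e).
  have HT : 2 * \sum_y \sum_y' rho g a b y y' = Dlev j0.+1 - Dlev j0.
    rewrite mass_nxa mass_nxb in I5'.
    rewrite -I5 -I5'; ring.
  have E2 : (2 * height d q L j0) `^ p = 2 * 2 `^ (p - 1) * hp j0.
    by rewrite powRM //; [rewrite two_pow | apply: h_ge0].
  rewrite Ed; apply: (le_trans (lerD I7 Hr)).
  rewrite E2 big_ltn; last by lia.
  rewrite le_eqVlt; apply/orP; left; apply/eqP.
  rewrite -HT; ring.
Qed.

Lemma InvAll k : (k <= L.+2)%N -> Inv k.
Proof.
elim: k => [|k IH] kL; first exact: Inv0.
by apply: InvS => //; apply: IH; apply: ltnW.
Qed.

Lemma sub_st k : (k <= L.+2)%N -> subcoupling mu nu (st k).2.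
Proof.
move=> /InvAll [I1 [I2 [I3 [I4 _]]]]; split => //.
- by move=> y; rewrite -(I3 y) lerDr; case: (I1 y).
- by move=> y; rewrite -(I4 y) lerDr; case: (I1 y).
Qed.

Lemma cost_bound k : (k <= L.+2)%N ->
  KR_cost d p C mu nu (st k).2 <=
  2 `^ (p - 1) * \sum_(L.+2 - k <= j < L.+2) hp j * (Dlev j.+1 - Dlev j)
  + C `^ p / 2 * Dlev (L.+2 - k).
Proof.
move=> /InvAll [I1 [I2 [I3 [I4 [I5 [I6 I7]]]]]].
rewrite /KR_cost /mass.
have Em : \sum_y mu y = \sum_y (st k).1.1 y + \sum_y \sum_y' (st k).2 y y'.
  by rewrite -big_split; apply: eq_bigr => y _ /=; rewrite I3.
have En : \sum_y nu y = \sum_y (st k).1.2 y + \sum_y \sum_y' (st k).2 y y'.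
  by rewrite [X in _ + X]exchange_big -big_split; apply: eq_bigr => y _ /=; rewrite I4.
rewrite Em En; apply: lerD => //.
rewrite -I5 le_eqVlt; apply/orP; left; apply/eqP.
by field.
Qed.

Lemma sbp (f D : nat -> R) l n : (l <= n)%N ->
  \sum_(l <= j < n.+1) f j * (D j.+1 - D j) =
  f n * D n.+1 - f l * D l + \sum_(l.+1 <= j < n.+1) (f j.-1 - f j) * D j.
Proof.
elim: n => [|n IH] ln.
  have -> : l = 0%N by lia.
  by rewrite big_nat1 big_geq //; ring.
case: (eqVneq l n.+1) => [->|ne].
  by rewrite big_nat1 big_geq //; ring.
have ln' : (l <= n)%N by lia.
rewrite big_nat_recr /=; last by lia.
rewrite IH //.
rewrite [in RHS]big_nat_recr /=; last by lia.
ring.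
Qed.

Lemma hpL : hp L.+1 = 0.
Proof.
rewrite /hp hL powR0 //; apply/eqP => p0; move: p1; rewrite p0; lra.
Qed.

Lemma final_bound l : (l <= L.+1)%N ->
  KR_cost d p C mu nu (st (L.+2 - l)).2 <=
  2 `^ (p - 1) * (\sum_(l.+1 <= j < L.+2) (hp j.-1 - hp j) * Dlev j)
  - 2 `^ (p - 1) * hp l * Dlev l + C `^ p / 2 * Dlev l.
Proof.
move=> lL.
have := @cost_bound (L.+2 - l) (leq_subr l L.+2).
rewrite subKn; last by lia.
rewrite sbp // hpL mul0r add0r.
move/le_trans; apply.
rewrite le_eqVlt; apply/orP; left; apply/eqP; ring.
Qed.

Lemma Bq_eq l : Bq d q p L Q par mu nu l =
  2 `^ (p - 1) * \sum_(l <= j < L.+2) (hp j.-1 - hp j) * Dlev j.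
Proof.
rewrite /Bq; congr (_ * _); apply: eq_big_nat => j /andP[_ jL].
rewrite /Dlev ifF ?mulr_sumr //.
by apply/negbTE; rewrite neq_ltn; apply/orP; left; lia.
Qed.

Lemma cost_ge0 pi : subcoupling mu nu pi -> 0 <= KR_cost d p C mu nu pi.
Proof.
case=> pi0 row col.
have [dd0 _ _ _] := dm.
rewrite /KR_cost; apply: addr_ge0.
  by apply: sumr_ge0 => y _; apply: sumr_ge0 => y' _; apply: mulr_ge0 => //; apply: powR_ge0.
apply: mulr_ge0; first exact: powR_ge0.
have h1 : \sum_y \sum_y' pi y y' <= mass mu by apply: ler_sum => y _; apply: row.
have h2 : \sum_y \sum_y' pi y y' <= mass nu.
  by rewrite exchange_big; apply: ler_sum => y _; apply: col.
lra.
Qed.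

Lemma KR_le pi : subcoupling mu nu pi -> KR d p C mu nu `^ p <= KR_cost d p C mu nu pi.
Proof.
move=> spi; rewrite /KR.
set S := (X in inf X).
have lb : forall c, S c -> 0 <= c by move=> c [pi' hpi' <-]; apply: cost_ge0.
have Sc : S (KR_cost d p C mu nu pi) by exists pi.
have hinf : inf S <= KR_cost d p C mu nu pi.
  by apply: (ge_inf _ Sc); exists 0 => c /lb.
have i0 : 0 <= inf S by apply: lb_le_inf; [exists (KR_cost d p C mu nu pi) | exact: lb].
have p0 : p != 0 by apply/eqP => p0; move: p1; rewrite p0; lra.
by rewrite -powRrM mulVf // powRr1.
Qed.

Hypothesis cardX : (1 < #|X|)%N.

Lemma le_diam x y : d x y <= diam d.
Proof.
rewrite /diam.
have h1 := le_bigmax 0 (fun y => d x y) y.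
have h2 := le_bigmax 0 (fun x => \big[Num.max/0]_y d x y) x.
exact: le_trans h1 h2.
Qed.

Lemma Q0_single : exists x0, Q 0 = [set x0]%SET.
Proof.
case: td => hmin _ _.
have [hc hmn] := hmin 0%N (leq0n _).
have : (0 < #|X|)%N by lia.
case/card_gt0P => z _.
have [y yQ _] := hc z.
have cov : is_cover d (q `^ (- (0%N)%:R) * diam d) [set y]%SET.
  move=> x; exists y; first by rewrite finset.in_set1.
  by rewrite oppr0 powRr0 mul1r; apply: le_diam.
have := hmn _ cov; rewrite cards1 => h.
have : (0 < #|Q 0|)%N by apply/card_gt0P; exists y.
move=> h'.
by apply/cards1P; rewrite eqn_leq h h'.
Qed.

Lemma Dlev0 : Dlev 0 = `|mass mu - mass nu|.
Proof.
rewrite /Dlev /=.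
case: Q0_single => x0 e; rewrite e finset.big_set1.
have md : forall f : X -> R, mass_desc L par f x0 0 = mass f.
  move=> f; rewrite /mass_desc /mass; apply: eq_bigl => y.
  by rewrite -finset.in_set1 -e anc_in.
by rewrite !md.
Qed.

Lemma DlevL1 : Dlev L.+1 = TV mu nu.
Proof.
case: td => _ QT _.
have md : forall (f : X -> R) x, mass_desc L par f x L.+1 = f x.
  move=> f x; rewrite /mass_desc (eq_bigl (fun y => y == x)) ?big_pred1_eq // => y.
  by rewrite anc_top.
rewrite /Dlev ifF; last by apply/negbTE; rewrite neq_ltn ltnSn.
rewrite QT /setTfin /TV.
by apply: eq_big => [x|x _]; [rewrite finset.in_setT | rewrite !md].
Qed.

Lemma Dlev_ge0 j : 0 <= Dlev j.
Proof.
rewrite /Dlev; case: ifP => _; last by apply: sumr_ge0.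
by apply: addr_ge0; apply: sumr_ge0 => y _; [apply: mu0 | apply: nu0].
Qed.

Lemma main_res :
  [/\ 2 * height d q L 0 <= C ->
        KR d p C mu nu `^ p <=
          (C `^ p / 2 - 2 `^ (p - 1) * height d q L 0 `^ p)
            * `|mass mu - mass nu| + Bq d q p L Q par mu nu 1,
      forall l : nat, (1 <= l <= L)%N ->
        2 * height d q L l <= C -> C < 2 * height d q L l.-1 ->
        KR d p C mu nu `^ p <= Bq d q p L Q par mu nu l &
      C <= Num.max (2 * height d q L L) (min_dist d) ->
        KR d p C mu nu `^ p <= C `^ p / 2 * TV mu nu].
Proof.
have p0 : 0 <= p by apply: le_trans p1; exact: ler01.
split.
- move=> _.
  apply: le_trans (@KR_le (st (L.+2 - 0)).2 (@sub_st (L.+2 - 0) (leq_subr 0 L.+2))) _.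
  apply: le_trans (@final_bound 0 (leq0n _)) _.
  rewrite Bq_eq Dlev0 /hp.
  rewrite le_eqVlt; apply/orP; left; apply/eqP; ring.
- move=> l /andP[l1 lL] _ Cl.
  apply: le_trans (@KR_le (st (L.+2 - l)).2 (@sub_st (L.+2 - l) (leq_subr l L.+2))) _.
  apply: le_trans (@final_bound l (leqW lL)) _.
  rewrite Bq_eq [X in _ <= _ * X]big_ltn; last by lia.
  have hc : C `^ p / 2 <= 2 `^ (p - 1) * hp l.-1.
    have : C `^ p <= (2 * height d q L l.-1) `^ p.
      apply: ge0_ler_powR => //; rewrite ?nnegrE; first exact: ltW.
        apply: mulr_ge0 => //; apply: h_ge0; lia.
      exact: ltW.
    rewrite powRM //; last by apply: h_ge0; lia.
    rewrite two_pow /hp; lra.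
  have := ler_wpM2r (Dlev_ge0 l) hc.
  set A := C `^ p / 2 * Dlev l.
  set B := 2 `^ (p - 1) * hp l.-1 * Dlev l.
  move=> hAB.
  move: hAB; rewrite /A /B.
  set E := 2 `^ (p - 1); set S := \sum_(_ <= _ < _) _.

  nra.
- move=> _.
  apply: le_trans (@KR_le (st (L.+2 - L.+1)).2 (@sub_st (L.+2 - L.+1) (leq_subr L.+1 L.+2))) _.
  apply: le_trans (@final_bound L.+1 (leqnn _)) _.
  rewrite big_geq // hpL DlevL1.
  rewrite le_eqVlt; apply/orP; left; apply/eqP; ring.
Qed.

End Main.

Theorem lemma2p1 (R : realType) (X : finType) (d : X -> X -> R)
    (mu nu : X -> R) (p C q : R) (L : nat)
    (Q : nat -> {set X}) (par : nat -> X -> X) :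
  is_metric d -> (1 < #|X|)%N ->
  is_measure mu -> is_measure nu ->
  1 <= p -> 0 < C -> 1 < q ->
  tree_data d q L Q par ->
  [/\ 2 * height d q L 0 <= C ->
        KR d p C mu nu `^ p <=
          (C `^ p / 2 - 2 `^ (p - 1) * height d q L 0 `^ p)
            * `|mass mu - mass nu| + Bq d q p L Q par mu nu 1,
      forall l : nat, (1 <= l <= L)%N ->
        2 * height d q L l <= C -> C < 2 * height d q L l.-1 ->
        KR d p C mu nu `^ p <= Bq d q p L Q par mu nu l &
      C <= Num.max (2 * height d q L L) (min_dist d) ->
        KR d p C mu nu `^ p <= C `^ p / 2 * TV mu nu].
Proof.
move=> hm hX hmu hnu hp hC hq htd.
by apply: main_res.
Qed.
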